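(* Let $s=(x,y,u,v)\in\mathbb{R}^4$ and write $W^k(s)=(x^{(k)},y^{(k)},u^{(k)},v^{(k)})$. (i) If one of the following holds: 1) $s\in P_0$; 2) $s\in Q_4$ and there exists $k\ge0$ with $y^{(k)}v^{(k)}\neq0$; 3) $s\in\mathcal N$ and $W(s)\in P_0$; 4) $s\in\mathcal N_0$ and $W^2(s)\in P_0$; 5) $s\in\mathcal N_1$ and $W^2(s)\in P_0$ — then $\lim_{n\to\infty}W^n(s)=(0,0,0,0)$. (ii) If one of the following holds: a) $s\in F$; b) $s\in\mathcal N$ and $W(s)\in F$; c) $s\in\mathcal N_0$ and $W^2(s)\in F$; d) $s\in\mathcal N_1$ and $W^2(s)\in F$ — then $W^n(s)\to+\infty$ (at least one coordinate of $W^n(s)$ tends to $+\infty$).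
   Context: $W:\mathbb{R}^4\to\mathbb{R}^4$ is the map $W(x,y,u,v)=(x',y',u',v')$ with $x'=\tfrac12 xu+\tfrac14 yu$, $y'=\tfrac12 xv+\tfrac14 yu+\tfrac13 yv$, $u'=\tfrac12 xu+\tfrac12 xv+\tfrac14 yu+\tfrac13 yv$, $v'=\tfrac14 yu+\tfrac13 yv$. $W^k$ denotes the $k$-fold iterate ($W^0$ the identity). Sets: $P=\{(x,y,u,v): x,y,u,v\ge0\}$; $Q_4=\{(x,y,u,v)\in P: x+y+u+v\le4\}$; $\mathcal N=\{(x,y,u,v): x,y,u,v\le0\}$; $\mathcal N_0=\{(x,y,u,v): x\le0,y\le0,u\ge0,v\ge0\}$; $\mathcal N_1=\{(x,y,u,v): x\ge0,y\ge0,u\le0,v\le0\}$; $P_0=\{(x,y,u,v)\in P: (x+y)(u+v)<4\}$; $F=\{(x,y,u,v)\in P: x+y+u+v>4,\ \max\{\tfrac{xu}{4},\tfrac{yu}{16},\tfrac{yv}{9}\}>1\}$. *)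

(* Defs.v *)
From Stdlib Require Import Reals.
Open Scope R_scope.

Record pt : Type := mkpt { px : R; py : R; pu : R; pv : R }.

Definition W (s : pt) : pt :=
  let x := px s in let y := py s in let u := pu s in let v := pv s in
  mkpt (1/2 * x * u + 1/4 * y * u)
       (1/2 * x * v + 1/4 * y * u + 1/3 * y * v)
       (1/2 * x * u + 1/2 * x * v + 1/4 * y * u + 1/3 * y * v)
       (1/4 * y * u + 1/3 * y * v).

Fixpoint Witer (k : nat) (s : pt) : pt :=
  match k with
  | O => s
  | S k' => W (Witer k' s)
  end.

Definition inP (s : pt) : Prop := 0 <= px s /\ 0 <= py s /\ 0 <= pu s /\ 0 <= pv s.
Definition inQ4 (s : pt) : Prop := inP s /\ px s + py s + pu s + pv s <= 4.
Definition inN (s : pt) : Prop := px s <= 0 /\ py s <= 0 /\ pu s <= 0 /\ pv s <= 0.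
Definition inN0 (s : pt) : Prop := px s <= 0 /\ py s <= 0 /\ 0 <= pu s /\ 0 <= pv s.
Definition inN1 (s : pt) : Prop := 0 <= px s /\ 0 <= py s /\ pu s <= 0 /\ pv s <= 0.
Definition inP0 (s : pt) : Prop := inP s /\ (px s + py s) * (pu s + pv s) < 4.
Definition inF (s : pt) : Prop :=
  inP s /\ px s + py s + pu s + pv s > 4 /\
  Rmax (px s * pu s / 4) (Rmax (py s * pu s / 16) (py s * pv s / 9)) > 1.

Definition orbit_to_zero (s : pt) : Prop :=
  Un_cv (fun n => px (Witer n s)) 0 /\ Un_cv (fun n => py (Witer n s)) 0 /\
  Un_cv (fun n => pu (Witer n s)) 0 /\ Un_cv (fun n => pv (Witer n s)) 0.

Definition orbit_to_infty (s : pt) : Prop :=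
  cv_infty (fun n => px (Witer n s)) \/ cv_infty (fun n => py (Witer n s)) \/
  cv_infty (fun n => pu (Witer n s)) \/ cv_infty (fun n => pv (Witer n s)).

(* Main.v *)
Require Import Defs.
From Stdlib Require Import Reals Lra Lia Psatz.
Open Scope R_scope.

Lemma Witer_add n k s : Witer (n + k) s = Witer n (Witer k s).
Proof. induction n; simpl; [reflexivity| now rewrite IHn]. Qed.

Lemma W_P s : inP s -> inP (W s).
Proof.
  unfold inP; destruct s as [x y u v]; simpl; intros (Hx&Hy&Hu&Hv).
  repeat split; nra.
Qed.

Lemma Witer_P n s : inP s -> inP (Witer n s).
Proof. intro H; induction n; simpl; auto using W_P. Qed.

Definition tq (s : pt) := (px s + py s) * (pu s + pv s).

Lemma tt_W s : tq (W s) = tq s * tq s / 4 - (py s * pv s) * (py s * pv s) / 36.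
Proof. destruct s; unfold tq, W; simpl; field. Qed.

Lemma sum_W s : px (W s) + py (W s) + pu (W s) + pv (W s) = tq s.
Proof. destruct s; unfold tq, W; simpl; field. Qed.

Lemma conv_lemma (f : nat -> R) C r : (forall n, 0 <= f n) ->
  (forall n, f (S n) <= C * r ^ n) -> 0 <= C -> 0 <= r < 1 -> Un_cv f 0.
Proof.
  intros Hf Hb HC Hr eps He.
  assert (He' : 0 < eps / (C + 1)) by (apply Rdiv_lt_0_compat; lra).
  destruct (pow_lt_1_zero r ltac:(rewrite Rabs_pos_eq; lra) _ He') as [N HN].
  exists (S N); intros n Hn. destruct n as [|n]; [lia|].
  unfold Rdist. rewrite Rminus_0_r, Rabs_pos_eq by apply Hf.
  specialize (HN n ltac:(lia)). rewrite Rabs_pos_eq in HN by (apply pow_le; lra).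
  specialize (Hb n).
  assert (C * r ^ n <= C * (eps / (C+1))) by (apply Rmult_le_compat_l; lra).
  assert (C * (eps / (C+1)) < (C + 1) * (eps / (C+1))) by nra.
  replace ((C + 1) * (eps / (C+1))) with eps in * by (field; lra). lra.
Qed.

Lemma P0_zero s : inP0 s -> orbit_to_zero s.
Proof.
  intros [HP Ht]. change (tq s < 4) in Ht.
  set (t0 := tq s) in *. set (r := t0 / 4).
  assert (Ht0 : 0 <= t0) by (unfold t0, tq; destruct HP as (?&?&?&?); nra).
  assert (Hr : 0 <= r < 1). { unfold r. split; lra. }
  assert (Hb : forall n, tq (Witer n s) <= t0 * r ^ n).
  { induction n.
    - simpl; unfold t0; lra.
    - simpl Witer. rewrite tt_W.
      pose proof (Witer_P n s HP) as HPn.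
      assert (0 <= tq (Witer n s)) by (unfold tq; destruct HPn as (?&?&?&?); nra).
      assert (r ^ n <= 1) by (rewrite <- (pow1 n); apply pow_incr; lra).
      assert (Hr1 : tq (Witer n s) <= t0) by nra.
      set (T := tq (Witer n s)) in *. set (q := py (Witer n s) * pv (Witer n s)).
      assert (T * T / 4 <= T * r) by (unfold r; nra).
      assert (T * r <= t0 * r ^ n * r) by nra.
      simpl pow. nra. }
  assert (Hc : forall n, 0 <= px (Witer n s) /\ 0 <= py (Witer n s) /\ 0 <= pu (Witer n s) /\ 0 <= pv (Witer n s))
    by (intro n; apply (Witer_P n s HP)).
  assert (Hs : forall n, px (Witer (S n) s) + py (Witer (S n) s) + pu (Witer (S n) s) + pv (Witer (S n) s) <= t0 * r ^ n)
    by (intro n; simpl Witer; rewrite sum_W; apply Hb).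
  unfold orbit_to_zero; repeat split; apply (conv_lemma _ t0 r); try lra;
   intro n; try apply Hc; pose proof (Hs n); pose proof (Hc (S n)); lra.
Qed.

Lemma zero_shift k s : orbit_to_zero (Witer k s) -> orbit_to_zero s.
Proof.
  assert (G : forall f : pt -> R, Un_cv (fun n => f (Witer n (Witer k s))) 0 -> Un_cv (fun n => f (Witer n s)) 0).
  { intros f H eps He. destruct (H eps He) as [N HN]. exists (N + k)%nat.
    intros n Hn. replace n with ((n - k) + k)%nat by lia. rewrite Witer_add. apply HN. lia. }
  intros (A&B&C&D); repeat split; apply G; assumption.
Qed.

Lemma inf_shift k s : orbit_to_infty (Witer k s) -> orbit_to_infty s.
Proof.
  assert (G : forall f : pt -> R, cv_infty (fun n => f (Witer n (Witer k s))) -> cv_infty (fun n => f (Witer n s))).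
  { intros f H M. destruct (H M) as [N HN]. exists (N + k)%nat.
    intros n Hn. replace n with ((n - k) + k)%nat by lia. rewrite Witer_add. apply HN. lia. }
  intros [A|[A|[A|A]]]; [left|right;left|right;right;left|right;right;right]; apply G; assumption.
Qed.

Lemma Q4_zero s k : inQ4 s -> py (Witer k s) * pv (Witer k s) <> 0 -> orbit_to_zero s.
Proof.
  intros [HP Hsum] Hk.
  assert (Hb : forall n, tq (Witer n s) <= 4).
  { induction n.
    - simpl. unfold tq. destruct HP as (?&?&?&?). pose proof (Rle_0_sqr (px s + py s - pu s - pv s)); unfold Rsqr in *; nra.
    - simpl Witer. rewrite tt_W.
      pose proof (Witer_P n s HP) as (?&?&?&?).
      assert (0 <= tq (Witer n s)) by (unfold tq; nra). nra. }
  apply (zero_shift (S k)). apply P0_zero. split.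
  - apply Witer_P; auto.
  - change (tq (Witer (S k) s) < 4). simpl Witer. rewrite tt_W.
    pose proof (Witer_P k s HP) as (?&?&?&?).
    assert (0 <= tq (Witer k s)) by (unfold tq; nra).
    specialize (Hb k).
    assert (0 < (py (Witer k s) * pv (Witer k s)) * (py (Witer k s) * pv (Witer k s))).
    { apply Rmult_lt_0_compat; destruct (Rle_dec 0 (py (Witer k s) * pv (Witer k s))) ;nra. }
    nra.
Qed.

Lemma infty_lemma (f : nat -> R) q0 : q0 > 1 -> (forall n, q0 ^ n <= f (S n)) -> cv_infty f.
Proof.
  intros Hq Hf M.
  destruct (Pow_x_infinity q0 ltac:(rewrite Rabs_pos_eq; lra) (M + 1)) as [N HN].
  exists (S N). intros n Hn. destruct n as [|n]; [lia|].
  specialize (HN n ltac:(lia)). rewrite Rabs_pos_eq in HN by (apply pow_le; lra).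
  specialize (Hf n). lra.
Qed.

Lemma grow (Q : pt -> R) s : (forall s, inP s -> Q (W s) >= Q s * Q s) ->
  (forall s, inP s -> pu (W s) >= Q s) -> inP s -> Q s > 1 -> orbit_to_infty s.
Proof.
  intros HQ Hu HP H1. right; right; left.
  set (q0 := Q s) in *.
  assert (Hb : forall n, q0 ^ S n <= Q (Witer n s)).
  { induction n.
    - simpl; unfold q0; lra.
    - simpl Witer. pose proof (HQ _ (Witer_P n s HP)).
      assert (1 <= q0 ^ n) by (apply pow_R1_Rle; lra).
      change (q0 ^ S (S n)) with (q0 * q0 ^ S n).
      assert (q0 <= q0 ^ S n) by (simpl; nra).
      nra. }
  apply (infty_lemma _ q0); auto. intro n. simpl Witer.
  pose proof (Hu _ (Witer_P n s HP)). pose proof (Hb n).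
  assert (q0 ^ n <= q0 ^ S n) by (simpl; assert (1 <= q0 ^ n) by (apply pow_R1_Rle; lra); nra).
  lra.
Qed.

Lemma prod_ge a b c k : 0 <= c -> c <= a -> c <= b -> 0 < k -> c*c/k <= a*b/k.
Proof.
  intros. unfold Rdiv. apply Rmult_le_compat_r.
  - left; apply Rinv_0_lt_compat; lra.
  - apply Rmult_le_compat; lra.
Qed.

Lemma F_infty s : inF s -> orbit_to_infty s.
Proof.
  intros (HP & _ & Hm). unfold Rmax in Hm.
  assert (HG : px s * pu s / 4 > 1 \/ py s * pu s / 16 > 1 \/ py s * pv s / 9 > 1).
  { destruct (Rle_dec (py s * pu s / 16) (py s * pv s / 9));
    destruct (Rle_dec (px s * pu s / 4) _); lra. }
  destruct HG as [G|[G|G]].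
  - apply (grow (fun s => px s * pu s / 4)); auto; clear Hm; intros [x y u v] (Hx&Hy&Hu&Hv); unfold W; simpl in *.
    + assert (0 <= x * u) by nra.
      assert (H1: x*u/2 <= 1/2*x*u + 1/4*y*u) by nra.
      assert (H2: x*u/2 <= 1/2*x*u + 1/2*x*v + 1/4*y*u + 1/3*y*v) by nra.
      pose proof (prod_ge _ _ (x*u/2) 4 ltac:(lra) H1 H2 ltac:(lra)).
      replace (x * u / 4 * (x * u / 4)) with (x*u/2*(x*u/2)/4) by field. lra.
    + nra.
  - apply (grow (fun s => py s * pu s / 16)); auto; clear Hm; intros [x y u v] (Hx&Hy&Hu&Hv); unfold W; simpl in *.
    + assert (0 <= y * u) by nra.
      assert (H1: y*u/4 <= 1/2*x*v + 1/4*y*u + 1/3*y*v) by nra.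
      assert (H2: y*u/4 <= 1/2*x*u + 1/2*x*v + 1/4*y*u + 1/3*y*v) by nra.
      pose proof (prod_ge _ _ (y*u/4) 16 ltac:(lra) H1 H2 ltac:(lra)).
      replace (y * u / 16 * (y * u / 16)) with (y*u/4*(y*u/4)/16) by field. lra.
    + nra.
  - apply (grow (fun s => py s * pv s / 9)); auto; clear Hm; intros [x y u v] (Hx&Hy&Hu&Hv); unfold W; simpl in *.
    + assert (0 <= y * v) by nra.
      assert (H1: y*v/3 <= 1/2*x*v + 1/4*y*u + 1/3*y*v) by nra.
      assert (H2: y*v/3 <= 1/4*y*u + 1/3*y*v) by nra.
      pose proof (prod_ge _ _ (y*v/3) 9 ltac:(lra) H1 H2 ltac:(lra)).
      replace (y * v / 9 * (y * v / 9)) with (y*v/3*(y*v/3)/9) by field. lra.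
    + nra.
Qed.

Theorem theorem3p1 :
  (forall s : pt,
      (inP0 s
       \/ (inQ4 s /\ exists k : nat, py (Witer k s) * pv (Witer k s) <> 0)
       \/ (inN s /\ inP0 (W s))
       \/ (inN0 s /\ inP0 (Witer 2 s))
       \/ (inN1 s /\ inP0 (Witer 2 s))) ->
      orbit_to_zero s)
  /\
  (forall s : pt,
      (inF s
       \/ (inN s /\ inF (W s))
       \/ (inN0 s /\ inF (Witer 2 s))
       \/ (inN1 s /\ inF (Witer 2 s))) ->
      orbit_to_infty s).
Proof.
  split; intros s H.
  - destruct H as [H|[[H [k Hk]]|[[_ H]|[[_ H]|[_ H]]]]].
    + now apply P0_zero.
    + now apply (Q4_zero s k).
    + apply (zero_shift 1). now apply P0_zero.
    + apply (zero_shift 2). now apply P0_zero.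
    + apply (zero_shift 2). now apply P0_zero.
  - destruct H as [H|[[_ H]|[[_ H]|[_ H]]]].
    + now apply F_infty.
    + apply (inf_shift 1). now apply F_infty.
    + apply (inf_shift 2). now apply F_infty.
    + apply (inf_shift 2). now apply F_infty.
Qed.
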